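(* Let $X$ be as in the standing setting with skeleton $X_1,\dots,X_k$. Let $x,y\in X$ lie in no $\operatorname{span}X_l$, and suppose $x\in\operatorname{pos}\{x_i,x_j\}$ and $y\in\operatorname{pos}\{y_i,y_j\}$ for some $i\neq j$, $x_i,y_i\in X_i$, $x_j,y_j\in X_j$. If $|X_i|>2$, then $x_i=y_i$.
   Context: Standing setting: $X\subset\mathbb R^n\setminus\{0\}$ is a finite set such that $0$ lies in the interior of $\operatorname{conv}X$, no element of $X$ is a positive multiple of another, and every $n+1$ points of $X$ are in good position. A finite set $A$ is in conical position if $0\notin\operatorname{conv}A$ and no point of $A$ lies in the positive hull (set of nonnegative linear combinations, denoted $\operatorname{pos}$) of the other points; it is in good position otherwise. A skeleton of $X$ is a collection of pairwise disjoint subsets $X_1,\dots,X_k\subseteq X$ such that each $X_i$ is the vertex set of a simplex whose relative interior contains $0$ and $\mathbb R^n=\operatorname{span}X_1\oplus\cdots\oplus\operatorname{span}X_k$. *)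

(* Defs.v *)
From HB Require Import structures.
From mathcomp Require Import all_boot all_order all_algebra.
From mathcomp Require Import finmap.
From mathcomp Require Import reals.
Set Implicit Arguments.
Unset Strict Implicit.
Unset Printing Implicit Defensive.
Import Order.TTheory GRing.Theory Num.Theory.
Local Open Scope ring_scope.
Local Open Scope fset_scope.

Section Convex.
Variables (R : realType) (n : nat).
Notation V := 'rV[R]_n.

Definition in_conv (A : {fset V}) (v : V) : Prop :=
  exists l : V -> R, (forall a, a \in A -> 0 <= l a) /\
    \sum_(a <- A) l a = 1 /\ \sum_(a <- A) l a *: a = v.

(* positive hull (nonnegative linear combinations); pos of the empty set is {0} *)
Definition in_pos (A : {fset V}) (v : V) : Prop :=
  exists l : V -> R, (forall a, a \in A -> 0 <= l a) /\
    \sum_(a <- A) l a *: a = v.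

Definition in_aff (A : {fset V}) (v : V) : Prop :=
  exists l : V -> R, \sum_(a <- A) l a = 1 /\ \sum_(a <- A) l a *: a = v.

(* interior (for the standard topology of R^n, via sup-norm balls) *)
Definition in_interior (S : V -> Prop) (p : V) : Prop :=
  exists2 e : R, 0 < e & forall v : V, (forall i, `|v 0 i - p 0 i| < e) -> S v.

Definition in_relint_conv (A : {fset V}) (p : V) : Prop :=
  in_conv A p /\
  exists2 e : R, 0 < e & forall v : V, in_aff A v ->
    (forall i, `|v 0 i - p 0 i| < e) -> in_conv A v.

Definition conical_position (A : {fset V}) : Prop :=
  ~ in_conv A 0 /\ forall a, a \in A -> ~ in_pos (A `\ a) a.

Definition good_position (A : {fset V}) : Prop := ~ conical_position A.

(* A is the vertex set of a simplex: A is affinely independent *)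
Definition affinely_independent (A : {fset V}) : Prop :=
  forall l : V -> R, \sum_(a <- A) l a = 0 -> \sum_(a <- A) l a *: a = 0 ->
    forall a, a \in A -> l a = 0.

Definition standing_setting (X : {fset V}) : Prop :=
  [/\ 0 \notin X,
      in_interior (in_conv X) 0,
      (forall x y, x \in X -> y \in X -> x != y ->
          ~ exists2 c : R, 0 < c & y = c *: x) &
      (forall A : {fset V}, A `<=` X -> #|` A| = n.+1 -> good_position A)].

Definition skeleton (X : {fset V}) (k : nat) (Xs : 'I_k -> {fset V}) : Prop :=
  [/\ (forall l, Xs l `<=` X),
      (forall l m, l != m -> Xs l `&` Xs m = fset0),
      (forall l, affinely_independent (Xs l) /\ in_relint_conv (Xs l) 0),
      (\sum_(l < k) <<Xs l>>)%VS = fullv &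
      directv (\sum_(l < k) <<Xs l>>)%VS].

End Convex.

(* Main.v *)
Require Import Defs.
From HB Require Import structures.
From mathcomp Require Import all_boot all_order all_algebra.
From mathcomp Require Import finmap.
From mathcomp Require Import reals.
From mathcomp Require Import lra zify.
Import Order.TTheory GRing.Theory Num.Theory.
Local Open Scope ring_scope.
Local Open Scope fset_scope.

Section Helpers.
Variables (R : realType) (n : nat).
Notation V := 'rV[R]_n.
Local Open Scope ring_scope.

Lemma sum_pick (T : choiceType) (M : zmodType) (A : {fset T}) (a0 : T) (F : T -> M) :
  a0 \in A -> \sum_(a <- A) (if a == a0 then F a else 0) = F a0.
Proof.
move=> Ha; rewrite (big_fsetD1 a0) //= eqxx big1_seq ?addr0 //.
by move=> a /andP[_]; rewrite in_fsetD1 => /andP[/negbTE -> _].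
Qed.

Lemma sum_restrict (A B : {fset V}) (mu : V -> R) : B `<=` A ->
  \sum_(a <- B) mu a *: a = \sum_(a <- A) (if a \in B then mu a else 0) *: a.
Proof.
move=> sBA.
rewrite (eq_big_seq (fun a => (if a \in B then mu a else 0) *: a)); last by move=> a ->.
rewrite (big_fset_incl _ sBA) //.
by move=> a _ /negbTE ->; rewrite scale0r.
Qed.

Lemma sum_pickZ (A : {fset V}) (a0 : V) (c : R) : a0 \in A ->
  \sum_(a <- A) (if a == a0 then c else 0) *: a = c *: a0.
Proof.
move=> Ha; rewrite -(@sum_pick _ _ A a0 (fun a => c *: a) Ha).
by apply: eq_bigr => a _; case: eqP => _; rewrite ?scale0r.
Qed.


Lemma simplex_rel (X : {fset V}) : affinely_independent X -> in_relint_conv X 0 ->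
  exists lam : V -> R, [/\ (forall a, a \in X -> 0 < lam a),
    \sum_(a <- X) lam a = 1, \sum_(a <- X) lam a *: a = 0 &
    forall nu : V -> R, \sum_(a <- X) nu a *: a = 0 ->
      forall a, a \in X -> nu a = (\sum_(b <- X) nu b) * lam a].
Proof.
move=> aff [[lam [l0 [l1 l2]]] [e e0 He]].
have rel : forall nu : V -> R, \sum_(a <- X) nu a *: a = 0 ->
      forall a, a \in X -> nu a = (\sum_(b <- X) nu b) * lam a.
  move=> nu Hnu a Ha; set t := \sum_(b <- X) nu b.
  apply/eqP; rewrite -subr_eq0; apply/eqP.
  apply: (aff (fun b => nu b - t * lam b)) => //.
  - by rewrite sumrB -mulr_sumr l1 mulr1 subrr.
  - under eq_bigr do rewrite scalerBl -scalerA.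
    by rewrite sumrB -scaler_sumr l2 scaler0 Hnu subrr.
exists lam; split => //.
move=> q Hq; rewrite lt_neqAle l0 // andbT; apply/negP => /eqP lq0.
pose M := \sum_(i < n) `|q 0 i|.
have M0 : 0 <= M by apply: sumr_ge0 => i _.
pose d := e / (M + 1).
have M1 : 0 < M + 1 by lra.
have dM : d * (M + 1) = e by rewrite /d mulfVK // gt_eqF.
have d0 : 0 < d by rewrite /d divr_gt0.
pose nu := fun a : V => (1 + d) * lam a - (if a == q then d else 0).
have s1 : \sum_(a <- X) nu a = 1.
  by rewrite sumrB -mulr_sumr l1 (@sum_pick _ _ X q (fun _ => d)) //; lra.
have s2 : \sum_(a <- X) nu a *: a = - d *: q.
  under eq_bigr do rewrite scalerBl -scalerA.
  by rewrite sumrB -scaler_sumr l2 scaler0 sub0r sum_pickZ // scaleNr.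
have : in_conv X (- d *: q).
  apply: He; first by exists nu.
  move=> i; rewrite !mxE subr0 normrM normrN (gtr0_norm d0).
  have hq : `|q 0 i| <= M.
    by rewrite /M (bigD1 i) //= lerDl; apply: sumr_ge0 => j _.
  have := normr_ge0 (q 0 i); nra.
case=> kap [k0 [k1 k2]].
have : kap q - nu q = 0.
  apply: (aff (fun a => kap a - nu a)) => //.
  - by rewrite sumrB k1 s1 subrr.
  - under eq_bigr do rewrite scalerBl.
    by rewrite sumrB k2 s2 subrr.
rewrite /nu eqxx -lq0; have := k0 q Hq; lra.
Qed.


Lemma dim_bound (X : {fset V}) (lam : V -> R) : (forall a, a \in X -> 0 < lam a) ->
  \sum_(a <- X) lam a = 1 -> \sum_(a <- X) lam a *: a = 0 ->
  (\dim <<X>>%VS < #|` X|)%N.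
Proof.
move=> l0 l1 l2.
case: (fset_0Vmem X) => [X0|[p Hp]].
  by move: l1; rewrite X0 big_seq_fset0 => /eqP; rewrite eq_sym oner_eq0.
have sub : (<<X>> <= <<X `\ p>>)%VS.
  apply/span_subvP => a Ha; case: (eqVneq a p) => [->|ap].
    move: l2; rewrite (big_fsetD1 p) //= => /eqP; rewrite addrC addr_eq0 => /eqP h.
    rewrite {1}(_ : p = - (lam p)^-1 *: \sum_(i <- X `\ p) lam i *: i); last first.
      by rewrite h scaleNr scalerN opprK scalerA mulVf ?scale1r // gt_eqF // l0.
    apply: rpredZ; rewrite big_seq; apply: rpred_sum => b Hb.
    by apply: rpredZ; apply: memv_span.
  by apply: memv_span; rewrite in_fsetD1 ap Ha.
apply: (leq_ltn_trans (dimvS sub)); apply: (leq_ltn_trans (dim_span _)).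
by rewrite [X in (_ < X)%N](cardfsD1 p) Hp.
Qed.

Lemma sgn1 (a b c d : R) : 0 < b -> 0 < d -> a * b + c * d = 0 -> a < 0 -> 0 < c.
Proof. nra. Qed.
Lemma sgn2 (a b c d : R) : 0 < b -> 0 < d -> a * b + c * d = 0 -> 0 < a -> c < 0.
Proof. nra. Qed.
Lemma sgn3 (m u c : R) : m + u * c = 0 -> 0 < c -> 0 < u -> m < 0.
Proof. nra. Qed.
Lemma sgn4 (u b t l : R) : u * b = t * l -> 0 < b -> 0 < l -> t < 0 -> u < 0.
Proof. nra. Qed.
Lemma sgn5 (u b t l : R) : u * b = t * l -> 0 < b -> 0 < l -> 0 < t -> 0 < u.
Proof. nra. Qed.

Lemma fsub_card (T : choiceType) (S : {fset T}) (m : nat) :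
  (m <= #|` S|)%N -> exists2 S' : {fset T}, S' `<=` S & #|` S'| = m.
Proof.
move=> hm; exists [fset a in take m (enum_fset S)].
  by apply/fsubsetP => a; rewrite inE => /mem_take.
by rewrite card_fseq undup_id ?size_takel // take_uniq // fset_uniq.
Qed.

End Helpers.
Arguments sgn1 {R a b c d}.
Arguments sgn2 {R a b c d}.
Arguments sgn3 {R m u c}.
Arguments sgn4 {R u b t l}.
Arguments sgn5 {R u b t l}.


Section Main.
Variables (R : realType) (n k : nat).
Notation V := 'rV[R]_n.
Local Open Scope ring_scope.
Variables (X : {fset V}) (Xs : 'I_k -> {fset V}).
Hypothesis sX : forall l, Xs l `<=` X.
Hypothesis disj : forall l m, l != m -> Xs l `&` Xs m = fset0.
Hypothesis full : (\sum_(l < k) <<Xs l>>)%VS = fullv.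
Hypothesis dir : directv (\sum_(l < k) <<Xs l>>)%VS.
Hypothesis simp : forall l, exists lam : V -> R, [/\ (forall a, a \in Xs l -> 0 < lam a),
    \sum_(a <- Xs l) lam a = 1, \sum_(a <- Xs l) lam a *: a = 0 &
    forall nu : V -> R, \sum_(a <- Xs l) nu a *: a = 0 ->
      forall a, a \in Xs l -> nu a = (\sum_(b <- Xs l) nu b) * lam a].
Variables (i j : 'I_k) (x y xi xj yi yj r q : V) (al be ga de : R) (p : 'I_k -> V).
Hypothesis ij : i != j.
Hypotheses (al0 : 0 < al) (be0 : 0 < be) (ga0 : 0 < ga) (de0 : 0 < de).
Hypothesis hx : x = al *: xi + be *: xj.
Hypothesis hy : y = ga *: yi + de *: yj.
Hypotheses (xiX : xi \in Xs i) (yiX : yi \in Xs i) (xjX : xj \in Xs j) (yjX : yj \in Xs j).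
Hypotheses (hxn : forall l, x \notin Xs l) (hyn : forall l, y \notin Xs l).
Hypotheses (xy : x != y) (xiyi : xi != yi).
Hypotheses (rX : r \in Xs i) (rxi : r != xi) (ryi : r != yi).
Hypotheses (qX : q \in Xs j) (qxj : q != xj) (hq : xj != yj -> q = yj).
Hypothesis hp : forall l, p l \in Xs l.
Hypotheses (xX : x \in X) (yX : y \in X).

Definition D l := if l == i then [fset r] else if l == j then [fset xj; q] else [fset p l].
Definition B l := Xs l `\` D l.
Definition U := [fset a in X | [exists l, a \in B l]].
Definition A := x |` (y |` U).

Lemma BX l : B l `<=` Xs l.
Proof. exact: fsubsetDl. Qed.

Lemma memB l a : (a \in B l) = (a \notin D l) && (a \in Xs l).
Proof. by rewrite /B in_fsetD. Qed.

Lemma memU a : (a \in U) = [exists l, a \in B l].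
Proof.
rewrite /U !inE; case: existsP => [[l Hl]|] /=; rewrite ?andbT ?andbF //.
by apply: (fsubsetP (sX l)); apply: (fsubsetP (BX l)).
Qed.

Lemma sumU (M : Type) (idx : M) (op : Monoid.com_law idx) (F : V -> M) :
  \big[op/idx]_(a <- U) F a = \big[op/idx]_(l < k) \big[op/idx]_(a <- B l) F a.
Proof.
rewrite (eq_big_seq (fun a => \big[op/idx]_(l < k) (if a \in B l then F a else idx))); last first.
  move=> a; rewrite memU => /existsP [l0 Hl0].
  rewrite (bigD1 l0) //= Hl0 big1 ?Monoid.mulm1 // => l hl; case: ifP => // Hal.
  have : a \in Xs l `&` Xs l0 by rewrite in_fsetI (fsubsetP (BX l)) ?(fsubsetP (BX l0)).
  by rewrite disj // in_fset0.
rewrite exchange_big; apply: eq_bigr => l _.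
have sBU : B l `<=` U.
  by apply/fsubsetP => a Ha; rewrite memU; apply/existsP; exists l.
rewrite -(big_fset_incl _ sBU); last by move=> a _ /negbTE ->.
by apply: eq_big_seq => a ->.
Qed.


Lemma sum_ifeq (M : zmodType) (c : 'I_k) (v : M) :
  \sum_(l < k) (if l == c then v else 0) = v.
Proof. by rewrite -big_mkcond big_pred1_eq. Qed.

Lemma sum_if2 (Y : {fset V}) (b : bool) (u v : V) (cu cv : R) :
  (b -> u \in Y /\ v \in Y) ->
  \sum_(a <- Y) (if b then (if a == u then cu else 0) + (if a == v then cv else 0) else 0) *: a
  = if b then cu *: u + cv *: v else 0.
Proof.
case: b => [/(_ isT) [hu hv]|_].
  under eq_bigr do rewrite scalerDl.
  by rewrite big_split /= !sum_pickZ.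
by rewrite big1 // => a _; rewrite scale0r.
Qed.

Lemma key (mu : V -> R) (a0 : V) :
  (forall b, b \in A -> mu b < 0 -> b = a0) ->
  \sum_(b <- A) mu b *: b = 0 -> forall b, b \in A -> mu b = 0.
Proof.
move=> neg rel.
have ji : j != i by rewrite eq_sym.
have xU : x \notin U.
  by rewrite memU; apply/existsP => -[l]; rewrite memB (negbTE (hxn l)) andbF.
have yU : y \notin U.
  by rewrite memU; apply/existsP => -[l]; rewrite memB (negbTE (hyn l)) andbF.
have xyU : x \notin y |` U by rewrite in_fset1U negb_or xy.
have xA : x \in A by rewrite /A fsetU11.
have yA : y \in A by rewrite /A in_fset1U in_fset1U eqxx orbT.
have UA : forall b, b \in U -> b \in A.
  by move=> b hb; rewrite /A !in_fset1U hb !orbT.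
have xiB : xi \in B i by rewrite memB /D eqxx in_fset1 eq_sym rxi xiX.
have yiB : yi \in B i by rewrite memB /D eqxx in_fset1 eq_sym ryi yiX.
have BU : forall l b, b \in B l -> b \in U.
  by move=> l b hb; rewrite memU; apply/existsP; exists l.
have xiA : xi \in A by apply/UA/(BU i).
have yiA : yi \in A by apply/UA/(BU i).
rewrite /A big_fsetU1 // big_fsetU1 // sumU in rel.
pose w l := \sum_(b <- B l) mu b *: b
  + (if l == i then (mu x * al) *: xi + (mu y * ga) *: yi else 0)
  + (if l == j then (mu x * be) *: xj + (mu y * de) *: yj else 0).
have sw : \sum_(l < k) w l = 0.
  rewrite !big_split /= !sum_ifeq -[RHS]rel /=.
  set mx := mu x; set my := mu y; set S := \sum_(l < k) _.
  rewrite hx hy !scalerDr !scalerA.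
  set a1 := (mx * al) *: xi; set a2 := (mx * be) *: xj.
  set c1 := (my * ga) *: yi; set c2 := (my * de) *: yj.
  by rewrite -addrA addrACA [RHS]addrA addrC.
have wV : forall l, w l \in <<Xs l>>%VS.
  move=> l; rewrite /w; apply: rpredD; first apply: rpredD.
  - rewrite big_seq; apply: rpred_sum => b hb; apply: rpredZ; apply: memv_span.
    exact: (fsubsetP (BX l)).
  - case: eqP => [->|_]; last exact: rpred0.
    by apply: rpredD; apply: rpredZ; apply: memv_span.
  - case: eqP => [->|_]; last exact: rpred0.
    by apply: rpredD; apply: rpredZ; apply: memv_span.
have w0 : forall l, w l = 0.
  move=> l; exact: ((elimT directv_sum_independent dir) w (fun l _ => wV l) sw l isT).
pose nu l a := (if a \in B l then mu a else 0)
  + (if l == i then (if a == xi then mu x * al else 0) + (if a == yi then mu y * ga else 0) else 0)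
  + (if l == j then (if a == xj then mu x * be else 0) + (if a == yj then mu y * de else 0) else 0).
have nuw : forall l, \sum_(a <- Xs l) nu l a *: a = w l.
  move=> l; rewrite /nu /w.
  under eq_bigr do rewrite !scalerDl.
  rewrite !big_split /= -sum_restrict ?BX // !sum_if2 //; by move=> /eqP ->.
have nuT : forall l, exists t, exists lam : V -> R, (forall a, a \in Xs l -> 0 < lam a) /\
    forall a, a \in Xs l -> nu l a = t * lam a.
  move=> l; have [lam [lp _ _ lr]] := simp l.
  exists (\sum_(b <- Xs l) nu l b), lam; split=> // a ha; apply: lr => //.
  by rewrite nuw w0.
have [ti [lami [lip lie]]] := nuT i.
have nir : nu i r = 0.
  by rewrite /nu memB /D eqxx in_fset1 eqxx /= (negbTE rxi) (negbTE ryi) (negbTE ij) !(addr0, add0r).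
have ti0 : ti = 0.
  move: (lie r rX); rewrite nir => /esym/eqP; rewrite mulf_eq0 (gt_eqF (lip r rX)) orbF.
  by move/eqP.
have e1 : mu xi + mu x * al = 0.
  move: (lie xi xiX); rewrite ti0 mul0r /nu xiB eqxx (negbTE xiyi) (negbTE ij).
  by rewrite eqxx !(addr0, add0r).
have e2 : mu yi + mu y * ga = 0.
  move: (lie yi yiX); rewrite ti0 mul0r /nu yiB !eqxx eq_sym (negbTE xiyi) (negbTE ij).
  by rewrite !(addr0, add0r).
have [tj [lamj [ljp lje]]] := nuT j.
have njx : nu j xj = mu x * be + (if xj == yj then mu y * de else 0).
  by rewrite /nu memB /D (negbTE ji) eqxx in_fset2 eqxx /= !(addr0, add0r).
have njq : nu j q = (if q == yj then mu y * de else 0).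
  by rewrite /nu memB /D (negbTE ji) eqxx in_fset2 eqxx orbT /= (negbTE qxj) !(addr0, add0r).
have mxy : mu x = 0 /\ mu y = 0.
  case: (eqVneq xj yj) => [exy|nxy].
  - have qy : (q == yj) = false by rewrite -exy (negbTE qxj).
    have tj0 : tj = 0.
      move: (lje q qX); rewrite njq qy => /esym/eqP; rewrite mulf_eq0 (gt_eqF (ljp q qX)) orbF.
      by move/eqP.
    move: (lje xj xjX); rewrite njx exy eqxx tj0 mul0r => ee.
    case: (ltgtP (mu x) 0) => hmx.
    + have ax : x = a0 by apply: neg.
      have hmy : 0 < mu y by apply: (sgn1 be0 de0 ee hmx).
      have : yi = a0 by apply: neg => //; apply: (sgn3 e2 ga0 hmy).
      by move=> ayi; move: (hxn i); rewrite ax -ayi yiX.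
    + have hmy : mu y < 0 by apply: (sgn2 be0 de0 ee).
      have ay : y = a0 by apply: neg.
      have : xi = a0 by apply: neg => //; apply: (sgn3 e1 al0 hmx).
      by move=> axi; move: (hyn i); rewrite ay -axi xiX.
    + split => //; move: ee; rewrite hmx mul0r add0r => /eqP; rewrite mulf_eq0 (gt_eqF de0) orbF.
      by move/eqP.
  - have qy := hq nxy.
    move: (lje xj xjX) (lje yj yjX); rewrite njx (negbTE nxy) addr0 -qy njq qy eqxx.
    rewrite -qy => hx1 hy1.
    have lxj := ljp xj xjX; have lyj := ljp q qX.
    case: (ltgtP tj 0) => htj.
    + have ax : x = a0 by apply: neg => //; apply: (sgn4 hx1 be0 lxj htj).
      have ay : y = a0 by apply: neg => //; apply: (sgn4 hy1 de0 lyj htj).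
      by move: xy; rewrite ax ay eqxx.
    + have axi : xi = a0.
        by apply: neg => //; apply: (sgn3 e1 al0 (sgn5 hx1 be0 lxj htj)).
      have ayi : yi = a0.
        by apply: neg => //; apply: (sgn3 e2 ga0 (sgn5 hy1 de0 lyj htj)).
      by move: xiyi; rewrite axi ayi eqxx.
    + move: hx1 hy1; rewrite htj !mul0r => /eqP; rewrite mulf_eq0 (gt_eqF be0) orbF => /eqP ->.
      by move=> /eqP; rewrite mulf_eq0 (gt_eqF de0) orbF => /eqP ->.
have [mx0 my0] := mxy.
have nuE : forall l a, nu l a = if a \in B l then mu a else 0.
  move=> l a; rewrite /nu mx0 my0 !mul0r.
  by case: (a == xi); case: (a == yi); case: (a == xj); case: (a == yj); case: (l == i); case: (l == j); rewrite /= !addr0.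
move=> b; rewrite /A !in_fset1U => /orP[/eqP->//|/orP[/eqP->//|]].
rewrite memU => /existsP [l hl].
have [tl [laml [llp lle]]] := nuT l.
have [d [dX dB]] : exists d, d \in Xs l /\ d \notin B l.
  case: (eqVneq l i) => [->|li].
    by exists r; rewrite memB /D eqxx in_fset1 eqxx.
  case: (eqVneq l j) => [->|lj].
    by exists xj; rewrite memB /D (negbTE ji) eqxx in_fset2 eqxx.
  by exists (p l); rewrite memB /D (negbTE li) (negbTE lj) in_fset1 eqxx.
have tl0 : tl = 0.
  move: (lle d dX); rewrite nuE (negbTE dB) => /esym/eqP.
  by rewrite mulf_eq0 (gt_eqF (llp d dX)) orbF => /eqP.
by move: (lle b (fsubsetP (BX l) b hl)); rewrite nuE hl tl0 mul0r.
Qed.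

Lemma xU : x \notin U.
Proof. by rewrite memU; apply/existsP => -[l]; rewrite memB (negbTE (hxn l)) andbF. Qed.
Lemma yU : y \notin U.
Proof. by rewrite memU; apply/existsP => -[l]; rewrite memB (negbTE (hyn l)) andbF. Qed.

Lemma cardA : (n.+1 <= #|` A|)%N.
Proof.
have hdim : forall l, (\dim <<Xs l>> < #|` Xs l|)%N.
  by move=> l; have [lam [lp l1 l2 _]] := simp l; exact: (@dim_bound _ _ _ _ lp l1 l2).
have h1 : (n <= \sum_(l < k) \dim <<Xs l>>)%N.
  apply: (@leq_trans (\dim (fullv : {vspace V}))); first by rewrite dimvf /dim /= mul1n.
  rewrite -full; exact: dimv_sum_leqif.
have hk : (\sum_(l < k) 1 = k)%N by rewrite sum1_card card_ord.
have h2 : (\sum_(l < k) \dim <<Xs l>> + k <= \sum_(l < k) #|` Xs l|)%N.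
  rewrite -[X in (_ + X <= _)%N]hk -big_split /=; apply: leq_sum => l _; rewrite addn1; exact: hdim.
have h3 : forall l, #|` Xs l| = (#|` B l| + 1 + (l == j))%N.
  move=> l; have sD : D l `<=` Xs l.
    rewrite /D; case: (eqVneq l i) => [->|_]; first by rewrite fsub1set.
    case: (eqVneq l j) => [->|_]; last by rewrite fsub1set.
    by apply/fsubsetP => a; rewrite in_fset2 => /orP[] /eqP ->.
  have cD : #|` D l| = (1 + (l == j))%N.
    rewrite /D; case: (eqVneq l i) => [->|li]; first by rewrite cardfs1 (negbTE ij).
    move: li; case: (eqVneq l j) => [->|lj] li; last by rewrite cardfs1.
    by rewrite cardfs2 eq_sym qxj.
  have := fsubset_leq_card sD; rewrite /B cardfsDS // cD => h.
  by rewrite -addnA subnK.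
have h4 : (\sum_(l < k) #|` Xs l| = \sum_(l < k) #|` B l| + k + 1)%N.
  rewrite (eq_bigr _ (fun l _ => h3 l)) !big_split /= hk.
  by congr (_ + _)%N; rewrite (bigD1 j) //= eqxx big1 // => l /negbTE ->.
have h5 : #|` A| = (\sum_(l < k) #|` B l|).+2.
  rewrite /A cardfsU1 in_fset1U negb_or xy xU cardfsU1 yU card_fset_sum1 sumU.
  by rewrite (eq_bigr _ (fun l _ => esym (card_fset_sum1 (B l)))).
rewrite h5; move: h1 h2 h4.
set a1 := \sum_(l < k) \dim _; set a2 := \sum_(l < k) #|` Xs _|; set a3 := \sum_(l < k) #|` B _|.
clear; lia.
Qed.

Lemma AX : A `<=` X.
Proof.
apply/fsubsetP => b; rewrite /A !in_fset1U => /orP[/eqP->|/orP[/eqP->|]].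
- exact: xX.
- exact: yX.
- by rewrite /U inE => /andP[].
Qed.

Lemma conicalA (A' : {fset V}) : A' `<=` A -> conical_position A'.
Proof.
move=> sA; split.
  case=> kap [k0 [k1 k2]].
  pose mu b := if b \in A' then kap b else 0.
  have hmu := @key mu x.
  have : forall b, b \in A -> mu b = 0.
    apply: hmu.
      by move=> b _; rewrite /mu; case: ifP => hb; rewrite ?ltxx // ltNge k0.
    by rewrite -sum_restrict.
  move=> h; move: k1; rewrite big_seq big1 => [/eqP|b hb]; first by rewrite eq_sym oner_eq0.
  by have := h b (fsubsetP sA b hb); rewrite /mu hb.
move=> a Ha [l [l0 l1]].
pose mu b := if b \in A' then (if b == a then -1 else l b) else 0.
have : forall b, b \in A -> mu b = 0.
  apply: (@key mu a).
    move=> b _; rewrite /mu; case: ifP => hb; last by rewrite ltxx.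
    case: eqP => // /eqP ba; rewrite ltNge l0 //.
    by rewrite in_fsetD1 ba.
  rewrite -(@sum_restrict _ _ A A' (fun b => if b == a then -1 else l b)) //.
  rewrite (big_fsetD1 a) //= eqxx scaleN1r.
  rewrite (eq_big_seq (fun b => l b *: b)); last first.
    by move=> b; rewrite in_fsetD1 => /andP[/negbTE ->].
  by rewrite l1 addNr.
by move=> /(_ a (fsubsetP sA a Ha)); rewrite /mu Ha eqxx => /eqP; rewrite oppr_eq0 oner_eq0.
Qed.

Lemma final_contra :
  (forall A' : {fset V}, A' `<=` X -> #|` A'| = n.+1 -> good_position A') -> False.
Proof.
move=> good; have [A' sA cA] := @fsub_card _ _ _ cardA.
have sAX : A' `<=` X by apply: fsubset_trans sA AX.
exact: (good A' sAX cA (conicalA A' sA)).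
Qed.

End Main.


Theorem proposition5p3 (R : realType) (n : nat) (X : {fset 'rV[R]_n})
  (k : nat) (Xs : 'I_k -> {fset 'rV[R]_n}) :
  standing_setting X -> skeleton X Xs ->
  forall x y : 'rV[R]_n, x \in X -> y \in X ->
  (forall l : 'I_k, x \notin <<Xs l>>%VS) ->
  (forall l : 'I_k, y \notin <<Xs l>>%VS) ->
  forall (i j : 'I_k) (xi yi xj yj : 'rV[R]_n), i != j ->
  xi \in Xs i -> yi \in Xs i -> xj \in Xs j -> yj \in Xs j ->
  in_pos [fset xi; xj] x -> in_pos [fset yi; yj] y ->
  (2 < #|` Xs i|)%N -> xi = yi.
Proof.
move=> [X0 _ _ good] [sX disj sk full dir] x y xX yX hxv hyv i j xi yi xj yj ij.
move=> xiX yiX xjX yjX [lx [lx0 lxs]] [ly [ly0 lys]] c2.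
case: (eqVneq xi yi) => // xiyi; exfalso.
have ji : j != i by rewrite eq_sym.
have simp := fun l => @simplex_rel R n (Xs l) (proj1 (sk l)) (proj2 (sk l)).
have disj_mem : forall l m a, l != m -> a \in Xs l -> a \in Xs m -> False.
  move=> l m a lm hl hm; have : a \in Xs l `&` Xs m by rewrite in_fsetI hl hm.
  by rewrite disj // in_fset0.
have xixj : xi != xj by apply/eqP => e; apply: (disj_mem i j xi ij xiX); rewrite e.
have yiyj : yi != yj by apply/eqP => e; apply: (disj_mem i j yi ij yiX); rewrite e.
have ex : x = (lx xi *: xi + lx xj *: xj)%R.
  by rewrite -lxs big_fsetU1 ?big_seq_fset1 // in_fset1.
have ey : y = (ly yi *: yi + ly yj *: yj)%R.
  by rewrite -lys big_fsetU1 ?big_seq_fset1 // in_fset1.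
have hxn : forall l, x \notin Xs l.
  by move=> l; apply/negP => h; move: (hxv l); rewrite memv_span.
have hyn : forall l, y \notin Xs l.
  by move=> l; apply/negP => h; move: (hyv l); rewrite memv_span.
have al0 : (0 < lx xi)%R.
  rewrite lt_neqAle lx0 ?andbT; last by rewrite in_fset2 eqxx.
  apply/negP => /eqP e; move: (hxv j); rewrite ex -e scale0r add0r.
  by rewrite rpredZ // memv_span.
have be0 : (0 < lx xj)%R.
  rewrite lt_neqAle lx0 ?andbT; last by rewrite in_fset2 eqxx orbT.
  apply/negP => /eqP e; move: (hxv i); rewrite ex -e scale0r addr0.
  by rewrite rpredZ // memv_span.
have ga0 : (0 < ly yi)%R.
  rewrite lt_neqAle ly0 ?andbT; last by rewrite in_fset2 eqxx.
  apply/negP => /eqP e; move: (hyv j); rewrite ey -e scale0r add0r.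
  by rewrite rpredZ // memv_span.
have de0 : (0 < ly yj)%R.
  rewrite lt_neqAle ly0 ?andbT; last by rewrite in_fset2 eqxx orbT.
  apply/negP => /eqP e; move: (hyv i); rewrite ey -e scale0r addr0.
  by rewrite rpredZ // memv_span.
have [r [rX rxi ryi]] : exists r, [/\ r \in Xs i, r != xi & r != yi].
  have : (0 < #|` Xs i `\` [fset xi; yi]|)%N.
    rewrite cardfsD subn_gt0.
    have h2 := fsubset_leq_card (fsubsetIr (Xs i) [fset xi; yi]).
    rewrite cardfs2 in h2; apply: (leq_ltn_trans h2); apply: leq_trans c2.
    by case: (xi != yi).
  rewrite cardfs_gt0 => /fset0Pn [r]; rewrite in_fsetD in_fset2 negb_or.
  by move=> /andP[/andP[h1 h2] h3]; exists r.
have [q [qX qxj hq]] : exists q, [/\ q \in Xs j, q != xj & (xj != yj -> q = yj)].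
  case: (eqVneq xj yj) => [exy|nxy]; last by exists yj; rewrite yjX eq_sym nxy.
  have [lam [lp l1 l2 _]] := simp j.
  case: (fset_0Vmem (Xs j `\ xj)) => [e|[q hq]]; last first.
    by exists q; move: hq; rewrite in_fsetD1 => /andP[h1 h2]; split => //; rewrite exy eqxx.
  move: l2; rewrite (big_fsetD1 xj) // e big_seq_fset0 /= addr0 => /eqP.
  rewrite scaler_eq0 (gt_eqF (lp xj xjX)) /= => /eqP xj0.
  by move: X0; rewrite -xj0 (fsubsetP (sX j) _ xjX).
have ex_l : forall l, exists a, a \in Xs l.
  move=> l; have [lam [_ l1 _ _]] := simp l.
  case: (fset_0Vmem (Xs l)) => [e|[a ha]]; last by exists a.
  by move: l1; rewrite e big_seq_fset0 => /eqP; rewrite eq_sym oner_eq0.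
pose p := fun l => xchoose (ex_l l).
have hp : forall l, p l \in Xs l := fun l => xchooseP (ex_l l).
have xy : x != y.
  apply/eqP => exy.
  pose w := fun l : 'I_k => if l == i then (lx xi *: xi - ly yi *: yi)%R
    else if l == j then (lx xj *: xj - ly yj *: yj)%R else 0%R.
  have wV : forall l, w l \in <<Xs l>>%VS.
    move=> l; rewrite /w; case: (eqVneq l i) => [->|_].
      by rewrite rpredB // rpredZ // memv_span.
    case: (eqVneq l j) => [->|_]; last exact: rpred0.
    by rewrite rpredB // rpredZ // memv_span.
  have sw : (\sum_(l < k) w l)%R = 0%R.
    rewrite (bigD1 i) //= (bigD1 j) //= big1; last first.
      by move=> l /andP[li lj]; rewrite /w (negbTE li) (negbTE lj).
    rewrite /w eqxx (negbTE ji) eqxx addr0 addrACA -opprD -ex -ey exy.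
    by rewrite subrr.
  have := (elimT directv_sum_independent dir) w (fun l _ => wV l) sw i isT.
  rewrite /w eqxx => h.
  pose nu := fun a : 'rV[R]_n => ((if a == xi then lx xi else 0) - (if a == yi then ly yi else 0))%R.
  have hnu : (\sum_(a <- Xs i) nu a *: a)%R = 0%R.
    rewrite -[RHS]h /nu; under eq_bigr do rewrite scalerBl.
    by rewrite sumrB !sum_pickZ.
  have [lam [lp _ _ lr]] := simp i.
  have := lr nu hnu r rX; have := lr nu hnu xi xiX.
  rewrite /nu eqxx (negbTE xiyi) (negbTE rxi) (negbTE ryi) !subr0 => e1 /esym/eqP.
  rewrite mulf_eq0 (gt_eqF (lp r rX)) orbF => /eqP t0.
  by move: e1; rewrite t0 mul0r => e1; move: al0; rewrite e1 ltxx.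
exact: (@final_contra R n k X Xs sX disj full dir simp i j x y xi xj yi yj r q
  (lx xi) (lx xj) (ly yi) (ly yj) p ij al0 be0 ga0 de0 ex ey xiX yiX xjX yjX
  hxn hyn xy xiyi rX rxi ryi qX qxj hq hp xX yX good).
Qed.
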